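(* Let $S=\{s_1,\dots,s_n\}$ be a finite poset whose Hasse graph $\Gamma(S)$ is acyclic (a forest), and suppose at least one of the forms $f_S$, $\mathcal T_S$ is positive definite. Then the other one is positive definite as well, and the following are equivalent: (a) $C(f_S)=\varnothing$ ($S$ is antimonotonous); (b) $\widetilde{\mathrm{St}}(f_S)\ne\varnothing$ ($S$ is $P$-faithful); (c) $\mathrm{St}(f_S)\ne\varnothing$.
   Context: $f_S(x)=\sum_{(i,j):\,s_i\le s_j}x_ix_j=\sum_i x_i^2+\sum_{s_i<s_j}x_ix_j$. The Hasse graph $\Gamma(S)$ has vertex set $S$ and an edge $s_i - s_j$ when one of them covers the other; the Tits form is $\mathcal T_S(x)=\sum_i x_i^2-\sum_{\text{edges } s_i - s_j}x_ix_j$. $H_n=\{x:\sum x_i=0\}$; $C(f)$ is the set of $h\in H_n\setminus\{0\}$ with either all $\partial f/\partial x_i(h)\le0$ or all $\ge0$. $\mathrm{St}(f)=\{a: a_i>0\ \forall i,\ \partial f/\partial x_i(a)$ independent of $i\}$. With $P_n=\{x:x_i>0,\sum x_i=1\}$ and $\overline P_n=\{x:x_i\ge0,\sum x_i=1\}$, $\widetilde{\mathrm{St}}(f)$ is the set of $u\in P_n$ with $f(u)>0$, $f(u)\le f(w)$ for all $w\in\overline P_n$, and $f(u)<f(w)$ for $w\in\overline P_n\setminus P_n$. *)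

(* Defs.v *)
From HB Require Import structures.
From mathcomp Require Import all_boot all_order all_algebra.
From mathcomp Require Import all_classical all_reals all_analysis.
Set Implicit Arguments. Unset Strict Implicit. Unset Printing Implicit Defensive.
Import Order.TTheory GRing.Theory Num.Theory.
Local Open Scope ring_scope.

Section Defs.
Variables (R : realType) (n : nat).

Definition is_poset (le : rel 'I_n) : Prop :=
  [/\ forall i, le i i,
      forall i j, le i j -> le j i -> i = j
    & forall i j k, le i j -> le j k -> le i k].

Definition ltS (le : rel 'I_n) (i j : 'I_n) : bool := (i != j) && le i j.

Definition covers (le : rel 'I_n) (i j : 'I_n) : bool :=
  ltS le i j && [forall k, ~~ (ltS le i k && ltS le k j)].

Definition hasse_edge (le : rel 'I_n) : rel 'I_n :=
  fun i j => covers le i j || covers le j i.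

Definition hasse_acyclic (le : rel 'I_n) : Prop :=
  forall s : seq 'I_n, uniq s -> (2 < size s)%N -> ~~ cycle (hasse_edge le) s.

Definition fS (le : rel 'I_n) (x : 'I_n -> R) : R :=
  \sum_i \sum_j (if le i j then x i * x j else 0).

(* Tits form: sum x_i^2 - sum over edges {s_i,s_j} of x_i x_j
   (each edge counted once, as the pair (i,j) with s_j covering s_i) *)
Definition titsS (le : rel 'I_n) (x : 'I_n -> R) : R :=
  \sum_i x i ^+ 2 - \sum_i \sum_j (if covers le i j then x i * x j else 0).

Definition pos_def (q : ('I_n -> R) -> R) : Prop :=
  forall x : 'I_n -> R, (exists i, x i != 0) -> 0 < q x.

Definition partial (f : ('I_n -> R) -> R) (i : 'I_n) (a : 'I_n -> R) : R :=
  derive1 (fun t : R => f (fun j => a j + (if j == i then t else 0))) 0.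

Definition inH (x : 'I_n -> R) : Prop := \sum_i x i = 0.

Definition inC (f : ('I_n -> R) -> R) (h : 'I_n -> R) : Prop :=
  [/\ inH h, exists i, h i != 0 &
      (forall i, partial f i h <= 0) \/ (forall i, 0 <= partial f i h)].

Definition inSt (f : ('I_n -> R) -> R) (a : 'I_n -> R) : Prop :=
  (forall i, 0 < a i) /\ (forall i j, partial f i a = partial f j a).

Definition inP (x : 'I_n -> R) : Prop := (forall i, 0 < x i) /\ \sum_i x i = 1.
Definition inPbar (x : 'I_n -> R) : Prop := (forall i, 0 <= x i) /\ \sum_i x i = 1.

Definition inStt (f : ('I_n -> R) -> R) (u : 'I_n -> R) : Prop :=
  [/\ inP u, 0 < f u,
      forall w, inPbar w -> f u <= f w
    & forall w, inPbar w -> ~ inP w -> f u < f w].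

End Defs.

(* Main.v *)
Require Import Defs.
From mathcomp Require Import all_boot all_order all_algebra.
From mathcomp Require Import all_classical all_reals all_analysis.
From mathcomp Require Import ring lra.
Set Implicit Arguments. Unset Strict Implicit. Unset Printing Implicit Defensive.
Import Order.TTheory GRing.Theory Num.Theory.

Section Comb.
Variables (n : nat) (le : rel 'I_n).
Hypothesis Hpo : is_poset le.
Hypothesis Hac : hasse_acyclic le.

Let refl : forall i, le i i. Proof. by case: Hpo. Qed.
Let anti : forall i j, le i j -> le j i -> i = j. Proof. by case: Hpo. Qed.
Let trans : forall i j k, le i j -> le j k -> le i k. Proof. by case: Hpo. Qed.

Lemma ltS_trans : transitive (ltS le).
Proof.
move=> j i k /andP[nij lij] /andP[njk ljk]; apply/andP; split; last exact: trans ljk.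
apply/eqP => eik; subst k; move/eqP: nij; apply; exact: anti.
Qed.

Lemma ltS_irr : irreflexive (ltS le).
Proof. by move=> i; rewrite /ltS eqxx. Qed.

Lemma covers_ltS i j : covers le i j -> ltS le i j.
Proof. by case/andP. Qed.

Lemma ltS_le i j : ltS le i j -> le i j.
Proof. by case/andP. Qed.

Lemma ex_max (P : pred 'I_n) x : P x ->
  exists m, [/\ P m, le x m & forall w, P w -> ~~ ltS le m w].
Proof.
move=> Px.
suff H : forall k x, (#|[pred w | P w && ltS le x w]| <= k)%N -> P x ->
  exists m, [/\ P m, le x m & forall w, P w -> ~~ ltS le m w] by exact: H _ _ (leqnn _) Px.
elim=> [|k IH] {}x hk {}Px.
  exists x; split=> // w Pw; apply/negP => xw.
  by rewrite leqn0 in hk; move/eqP: hk => /card0_eq /(_ w); rewrite inE Pw xw.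
case: (boolP [exists w, P w && ltS le x w]) => [/existsP[w /andP[Pw xw]]|].
  have hc : (#|[pred v | P v && ltS le w v]| <= k)%N.
    rewrite -ltnS; apply: leq_trans hk; apply: proper_card.
    apply/fintype.properP; split.
      apply/fintype.subsetP => v; rewrite !inE => /andP[-> wv] /=; exact: ltS_trans xw wv.
    by exists w; rewrite !inE ?Pw ?xw ?ltS_irr ?andbF.
  have [m [Pm wm mmax]] := IH w hc Pw.
  by exists m; split=> //; apply: trans (ltS_le xw) wm.
rewrite negb_exists => /forallP hn; exists x; split=> // w Pw.
by have := hn w; rewrite Pw.
Qed.

Lemma ex_cover_below i k : ltS le i k -> exists j, le i j && covers le j k.
Proof.
move=> ik.
have [m [/andP[im mk] _ mmax]] := ex_max (P := fun w => le i w && ltS le w k) (x := i) (introT andP (conj (refl i) ik)).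
exists m; rewrite im /covers mk /=; apply/forallP => w; apply/negP => /andP[mw wk].
by have := mmax w; rewrite wk (trans im (ltS_le mw)) mw => /(_ isT).
Qed.

Lemma ex_chain x y : le x y -> exists s, path (covers le) x s && (last x s == y).
Proof.
suff H : forall k y, (#|[pred w | le x w && ltS le w y]| <= k)%N -> le x y ->
  exists s, path (covers le) x s && (last x s == y) by move=> /(H _ _ (leqnn _)).
elim=> [|k IH] {}y hk xy.
  case: (eqVneq x y) => [<-|nxy]; first by exists [::]; rewrite /= eqxx.
  by rewrite leqn0 in hk; move/eqP: hk => /card0_eq /(_ x); rewrite inE refl /ltS nxy xy.
case: (eqVneq x y) => [<-|nxy]; first by exists [::]; rewrite /= eqxx.
have [j /andP[xj jy]] := ex_cover_below (i := x) (k := y) (introT andP (conj nxy xy)).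
have hc : (#|[pred w | le x w && ltS le w j]| <= k)%N.
  rewrite -ltnS; apply: leq_trans hk; apply: proper_card.
  apply/fintype.properP; split.
    apply/fintype.subsetP => v; rewrite !inE => /andP[-> vj] /=.
    exact: ltS_trans vj (covers_ltS jy).
  by exists j; rewrite !inE ?xj ?ltS_irr ?(covers_ltS jy) ?andbF.
have [s /andP[ps ls]] := IH j hc xj.
exists (rcons s y); rewrite rcons_path ps last_rcons eqxx (eqP ls) jy.
by [].
Qed.

Lemma chain_le x s : path (ltS le) x s ->
  le x (last x s) /\ forall z, z \in s -> le z (last x s).
Proof.
elim: s x => [|y s IH] x /=; first by split.
move=> /andP[xy ps]; have [h1 h2] := IH _ ps; split.
  exact: trans (ltS_le xy) h1.
by move=> z; rewrite inE => /orP[/eqP->|/h2].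
Qed.

Lemma hasse_sym : symmetric (hasse_edge le).
Proof. by move=> i j; rewrite /hasse_edge orbC. Qed.

Lemma path_ltS x s : path (covers le) x s -> path (ltS le) x s.
Proof. by apply: sub_path => a b; exact: covers_ltS. Qed.

Lemma path_hasse x s : path (covers le) x s -> path (hasse_edge le) x s.
Proof. by apply: sub_path => a b h; rewrite /hasse_edge h. Qed.

Lemma down_unique i k j1 j2 : le i j1 -> covers le j1 k -> le i j2 -> covers le j2 k -> j1 = j2.
Proof.
move=> ij1 c1 ij2 c2; apply/eqP/negPn/negP => nj.
have [m [/andP[mj1 mj2] im mmax]] := ex_max (P := fun w => le w j1 && le w j2) (x := i) (introT andP (conj ij1 ij2)).
have nmj1 : m != j1.
  apply/eqP=> emj; subst m.
  move/andP: c1 => [_ /forallP /(_ j2)]; rewrite {1}/ltS nj mj2 (covers_ltS c2) //.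
have nmj2 : m != j2.
  apply/eqP=> emj; subst m.
  move/andP: c2 => [_ /forallP /(_ j1)]; rewrite {1}/ltS eq_sym nj mj1 (covers_ltS c1) //.
have [s1 /andP[p1 /eqP l1]] := ex_chain mj1.
have [s2 /andP[p2 /eqP l2]] := ex_chain mj2.
have q1 : path (ltS le) m (rcons s1 k) by rewrite rcons_path l1 (covers_ltS c1) andbT; exact: path_ltS p1.
have q2 : path (ltS le) m (rcons s2 k) by rewrite rcons_path l2 (covers_ltS c2) andbT; exact: path_ltS p2.
have u1 : uniq (m :: rcons s1 k) by apply: (sorted_uniq ltS_trans ltS_irr).
have u2 : uniq (m :: rcons s2 k) by apply: (sorted_uniq ltS_trans ltS_irr).
have [_ le1] := chain_le (path_ltS p1).
have [_ le2] := chain_le (path_ltS p2).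
rewrite l1 in le1; rewrite l2 in le2.
have ms2 : m \notin s2 by move: u2; rewrite /= mem_rcons inE negb_or => /andP[/andP[]].
have disj : forall z, z \in s1 -> z \in s2 -> False.
  move=> z z1 z2.
  have mz : ltS le m z.
    by have := order_path_min ltS_trans (path_ltS p1) => /allP /(_ z z1).
  by have := mmax z; rewrite (le1 z z1) (le2 z z2) mz => /(_ isT).
have s2n : s2 != [::] by apply/eqP => e; subst s2; move: l2 nmj2 => /= ->; rewrite eqxx.
have := Hac (s := m :: s1 ++ k :: rev s2).
have -> : uniq (m :: s1 ++ k :: rev s2).
  move: u1 u2; rewrite /= !mem_rcons !inE !rcons_uniq !mem_cat !inE.
  rewrite !negb_or => /andP[/andP[mk ms1] /andP[ks1 us1]] /andP[_ /andP[ks2 us2]].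
  rewrite mem_rev mk ms1 ms2 /= cat_uniq us1 /= mem_rev ks2 rev_uniq us2 /= andbT.
  rewrite (negbTE ks1) /=; apply/hasPn => z; rewrite mem_rev => z2; apply/negP => z1; exact: disj z1 z2.
have -> : (2 < size (m :: s1 ++ k :: rev s2))%N.
  by rewrite /= size_cat /= size_rev addnS !ltnS addn_gt0 [(0 < size s2)%N]lt0n size_eq0 s2n orbT.
move=> /(_ isT isT); apply/negP/negPn.
have e1 : hasse_edge le j1 k by rewrite /hasse_edge c1.
have e2 : hasse_edge le j2 k by rewrite /hasse_edge c2.
rewrite /cycle rcons_cat rcons_cons /= cat_path l1 /= e1 /= -rev_cons.
apply/andP; split; first exact: path_hasse p1.
have := rev_path (hasse_edge le) m (rcons s2 k).
rewrite last_rcons belast_rcons => ->.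
rewrite (eq_path (e' := hasse_edge le)); last by move=> a b; exact: hasse_sym.
rewrite rcons_path l2 e2 andbT.
exact: path_hasse p2.
Qed.

End Comb.

Local Open Scope ring_scope.

Section CountR.
Variables (R : realType) (n : nat) (le : rel 'I_n).
Hypothesis Hpo : is_poset le.
Hypothesis Hac : hasse_acyclic le.

Lemma count_R i k :
  \sum_j (if le i j && covers le j k then (1:R) else 0) = if ltS le i k then 1 else 0.
Proof.
have [refl anti trans] := Hpo.
case: ifP => ik.
  have [j0 /andP[ij0 c0]] := ex_cover_below Hpo ik.
  rewrite (bigD1 j0) //= ij0 c0 /= big1 ?addr0 // => j nj.
  case: ifP => // /andP[ij cj]; move: nj.
  by rewrite (down_unique Hpo Hac ij cj ij0 c0) eqxx.
apply: big1 => j _; case: ifP => // /andP[ij cj].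
move: ik; rewrite /ltS.
have jk := covers_ltS cj; move: (jk) => /andP[njk ljk].
rewrite (trans _ _ _ ij ljk) andbT => /negbFE /eqP eik; subst k.
by move: njk; rewrite (anti _ _ ij ljk) eqxx.
Qed.
End CountR.

Definition dual n (le : rel 'I_n) : rel 'I_n := fun a b => le b a.

Lemma dual_poset n (le : rel 'I_n) : is_poset le -> is_poset (dual le).
Proof.
case=> r a t; split => //.
- by move=> i j h1 h2; apply: a.
- by move=> i j k h1 h2; exact: t h2 h1.
Qed.

Lemma covers_dual n (le : rel 'I_n) a b : covers (dual le) a b = covers le b a.
Proof.
rewrite /covers /ltS /dual eq_sym; congr (_ && _).
apply: eq_forallb => k; rewrite andbC; congr (~~ (_ && _)); by rewrite eq_sym.
Qed.

Lemma dual_acyclic n (le : rel 'I_n) : hasse_acyclic le -> hasse_acyclic (dual le).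
Proof.
move=> H s us hs.
have E : hasse_edge (dual le) =2 hasse_edge le.
  by move=> a b; rewrite /hasse_edge (covers_dual le a b) (covers_dual le b a) orbC.
by rewrite (eq_cycle E); apply: H.
Qed.

Section Alg.
Variables (R : realType) (n : nat) (le : rel 'I_n).

Definition Zv (y : 'I_n -> R) i := \sum_j (if le i j then y j else 0).
Definition Mv (x : 'I_n -> R) j := x j - \sum_k (if covers le j k then x k else 0).
Definition gS (a : 'I_n -> R) i :=
  \sum_j (if le i j then a j else 0) + \sum_j (if le j i then a j else 0).

Lemma fS_Zv y : fS le y = \sum_i y i * Zv y i.
Proof.
apply: eq_bigr => i _; rewrite /Zv mulr_sumr; apply: eq_bigr => j _.
by case: ifP => _; rewrite ?mulr0.
Qed.

Lemma Bsum_expand (h u : 'I_n -> R) : \sum_i h i * gS u i =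
  \sum_i \sum_j (if le i j then h i * u j + u i * h j else 0).
Proof.
have -> : \sum_i \sum_j (if le i j then h i * u j + u i * h j else 0) =
  \sum_i \sum_j (if le i j then h i * u j else 0) +
  \sum_i \sum_j (if le i j then u i * h j else 0).
  rewrite -big_split; apply: eq_bigr => i _; rewrite -big_split; apply: eq_bigr => j _.
  by case: ifP => _; rewrite /= ?addr0.
rewrite /gS; under eq_bigr do rewrite mulrDr; rewrite big_split /=; congr (_ + _).
  apply: eq_bigr => i _; rewrite mulr_sumr; apply: eq_bigr => j _.
  by case: ifP => _; rewrite ?mulr0.
transitivity (\sum_i \sum_j (if le j i then h i * u j else 0) : R).
  apply: eq_bigr => i _; rewrite mulr_sumr; apply: eq_bigr => j _.
  by case: ifP => _; rewrite ?mulr0.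
rewrite exchange_big; apply: eq_bigr => i _; apply: eq_bigr => j _.
by case: ifP => _; rewrite // mulrC.
Qed.

Lemma Bsym (h u : 'I_n -> R) : \sum_i h i * gS u i = \sum_i u i * gS h i.
Proof.
rewrite !Bsum_expand; apply: eq_bigr => i _; apply: eq_bigr => j _.
by case: ifP => _; rewrite // addrC.
Qed.

Lemma Bself (h : 'I_n -> R) : \sum_i h i * gS h i = fS le h + fS le h.
Proof.
rewrite Bsum_expand /fS -big_split; apply: eq_bigr => i _; rewrite -big_split.
apply: eq_bigr => j _; by case: ifP => _ /=; rewrite ?addr0.
Qed.

Lemma fS_expand (u h : 'I_n -> R) t :
  fS le (fun j => u j + t * h j) = fS le u + t * (\sum_i h i * gS u i) + t ^+ 2 * fS le h.
Proof.
rewrite Bsum_expand /fS !mulr_sumr -!big_split; apply: eq_bigr => i _.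
rewrite !mulr_sumr -!big_split; apply: eq_bigr => j _ /=.
case: ifP => _; last by rewrite !mulr0 !addr0.
ring.
Qed.

Lemma gS_scale c (a : 'I_n -> R) i : gS (fun j => c * a j) i = c * gS a i.
Proof.
rewrite /gS mulrDr !mulr_sumr; congr (_ + _); apply: eq_bigr => j _;
  by case: ifP => _; rewrite ?mulr0.
Qed.

Lemma partial_fS i (a : 'I_n -> R) : partial (fS le) i a = gS a i.
Proof.
rewrite /partial.
set e : 'I_n -> R := fun j => if j == i then 1 else 0.
have -> : (fun t : R => fS le (fun j => a j + (if j == i then t else 0))) =
  (fun t => fS le a + t * (\sum_k e k * gS a k) + t ^+ 2 * fS le e).
  apply: funext => t; rewrite -fS_expand; congr (fS le _); apply: funext => j.
  by rewrite /e; case: ifP => _; rewrite ?mulr1 ?mulr0.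
have -> : \sum_k e k * gS a k = gS a i.
  rewrite /e; under eq_bigr do rewrite (fun_if (fun v => v * gS a _)) mul1r mul0r.
  by rewrite -big_mkcond big_pred1_eq.
rewrite derive1E deriveD //= ?deriveM //= ?deriveD //= ?deriveM //= ?derive_cst ?derive_id.
rewrite !(scaler0, scale0r, add0r, addr0).
by rewrite /GRing.scale /= mulr1.
Qed.

End Alg.

Section Transfer.
Variables (R : realType) (n : nat) (le : rel 'I_n).
Hypothesis Hpo : is_poset le.
Hypothesis Hac : hasse_acyclic le.

Lemma ZM (x : 'I_n -> R) i : Zv le (Mv le x) i = x i.
Proof.
rewrite /Zv /Mv.
have -> : \sum_j (if le i j then x j - \sum_k (if covers le j k then x k else 0) else 0) =
  \sum_j (if le i j then x j else 0) -
  \sum_j \sum_k (if le i j && covers le j k then x k else 0).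
  rewrite -sumrB; apply: eq_bigr => j _; case: ifP => ij /=; last first.
    by rewrite big1 ?subr0.
  by congr (_ - _); apply: eq_bigr => k _.
rewrite exchange_big /=.
have -> : \sum_k \sum_j (if le i j && covers le j k then x k else 0) =
  \sum_k (if ltS le i k then x k else 0).
  apply: eq_bigr => k _.
  transitivity (x k * (if ltS le i k then 1 else 0)); last by case: ifP => _; rewrite ?mulr1 ?mulr0.
  rewrite -(count_R R Hpo Hac i k) mulr_sumr.
  by apply: eq_bigr => j _; case: ifP => _; rewrite ?mulr1 ?mulr0.
rewrite -sumrB.
have -> : \sum_k ((if le i k then x k else 0) - (if ltS le i k then x k else 0)) =
  \sum_k (if k == i then x k else 0).
  apply: eq_bigr => k _; rewrite /ltS; case: eqVneq => [->|nik].
    by have [refl _ _] := Hpo; rewrite refl /= subr0.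
  by rewrite /=; case: ifP => _; rewrite subrr.
by rewrite -big_mkcond big_pred1_eq.
Qed.

Lemma MZ (y : 'I_n -> R) j : Mv le (Zv le y) j = y j.
Proof.
rewrite /Mv /Zv.
have -> : \sum_k (if covers le j k then \sum_j0 (if le k j0 then y j0 else 0) else 0) =
  \sum_k \sum_i (if covers le j k && le k i then y i else 0).
  apply: eq_bigr => k _; case: ifP => cjk /=; last by rewrite big1.
  by apply: eq_bigr.
rewrite exchange_big /=.
have -> : \sum_i \sum_k (if covers le j k && le k i then y i else 0) =
  \sum_i (if ltS le j i then y i else 0).
  apply: eq_bigr => i _.
  have := count_R R (dual_poset Hpo) (dual_acyclic Hac) i j.
  have -> : ltS (dual le) i j = ltS le j i by rewrite /ltS /dual eq_sym.
  move=> hc.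
  transitivity (y i * (if ltS le j i then 1 else 0)); last by case: ifP => _; rewrite ?mulr1 ?mulr0.
  rewrite -hc mulr_sumr; apply: eq_bigr => k _.
  rewrite (covers_dual le k j) /dual andbC.
  by case: ifP => _; rewrite ?mulr1 ?mulr0.
rewrite -sumrB.
have -> : \sum_k ((if le j k then y k else 0) - (if ltS le j k then y k else 0)) =
  \sum_k (if k == j then y k else 0).
  apply: eq_bigr => k _; rewrite /ltS; case: eqVneq => [->|njk].
    by have [refl _ _] := Hpo; rewrite refl /= subr0.
  by rewrite /=; case: ifP => _; rewrite subrr.
by rewrite -big_mkcond big_pred1_eq.
Qed.

Lemma tits_eq (x : 'I_n -> R) : titsS le x = fS le (Mv le x).
Proof.
rewrite fS_Zv.
under [RHS]eq_bigr do rewrite ZM.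
rewrite /titsS /Mv.
under [RHS]eq_bigr do rewrite mulrBl.
rewrite sumrB; congr (_ - _).
apply: eq_bigr => i _; rewrite mulr_suml; apply: eq_bigr => k _.
by case: ifP => _; rewrite ?mul0r // mulrC.
Qed.

Lemma pd_transfer :
  pos_def (@fS R n le) <-> pos_def (@titsS R n le).
Proof.
split=> H x [i xi].
  rewrite tits_eq; apply: H.
  case: (pselect (exists j, Mv le x j != 0)) => // hn; exfalso.
  move: xi; rewrite -ZM /Zv big1 ?eqxx // => j _.
  case: ifP => // _; apply/eqP; apply: contraT => hj; case: hn; by exists j.
have -> : x = Mv le (Zv le x) by apply: funext => j; rewrite MZ.
rewrite -tits_eq; apply: H.
case: (pselect (exists j, Zv le x j != 0)) => // hn; exfalso.
move: xi; rewrite -MZ /Mv.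
have z : forall j, Zv le x j = 0.
  move=> j; apply/eqP; apply: contraT => hj; case: hn; by exists j.
rewrite z big1 ?subr0 ?eqxx // => k _; by rewrite z; case: ifP => _.
Qed.

End Transfer.

Section Quad.
Variables (R : realType) (n : nat) (le : rel 'I_n).
Hypothesis Hpd : pos_def (@fS R n le).

Lemma fS_zero (h : 'I_n -> R) : (forall i, h i = 0) -> fS le h = 0.
Proof.
move=> z; apply: big1 => i _; apply: big1 => j _; by rewrite z mul0r; case: ifP => _.
Qed.

Lemma fS_ge0 (h : 'I_n -> R) : 0 <= fS le h.
Proof.
case: (pselect (exists i, h i != 0)) => [ex|hn]; first exact/ltW/Hpd.
rewrite fS_zero // => i; apply/eqP; apply: contraT => hi; case: hn; by exists i.
Qed.

Lemma gS_inj (h : 'I_n -> R) : (forall i, gS le h i = 0) -> forall i, h i = 0.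
Proof.
move=> z i; apply/eqP; apply: contraT => hi.
have := Hpd (ex_intro _ i hi).
have : \sum_i h i * gS le h i = 0 by apply: big1 => j _; rewrite z mulr0.
rewrite Bself => e; lra.
Qed.

Definition Gm : 'M[R]_n := \matrix_(i, j) ((if le j i then 1 else 0) + (if le i j then 1 else 0)).

Lemma vG (v : 'rV[R]_n) j : (v *m Gm) 0 j = gS le (fun i => v 0 i) j.
Proof.
rewrite !mxE /gS -big_split; apply: eq_bigr => i _; rewrite mxE mulrDr.
by congr (_ + _); case: ifP => _; rewrite ?mulr1 ?mulr0.
Qed.

Lemma gS_surj (b : 'I_n -> R) : exists h, forall j, gS le h j = b j.
Proof.
have GU : Gm \in unitmx.
  rewrite -row_free_unit; apply: inj_row_free => v hv; apply/rowP => i.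
  have := gS_inj (h := fun i => v 0 i); rewrite mxE; apply => j.
  by rewrite -vG hv mxE.
exists (fun i => ((\row_j b j) *m invmx Gm) 0 i) => j.
by rewrite -vG mulmxKV // mxE.
Qed.

Lemma St_notC : (exists a, inSt (@fS R n le) a) -> ~ exists h, inC (@fS R n le) h.
Proof.
move=> [a [apos aeq]] [h [hH [i0 hi0] hsign]].
have key : \sum_i a i * gS le h i = 0.
  rewrite -Bsym (eq_bigr (fun i => h i * gS le a i0)); last first.
    by move=> i _; rewrite -(partial_fS le i a) -(partial_fS le i0 a) (aeq i i0).
  by rewrite -mulr_suml hH mul0r.
apply/negP: hi0; apply/negPn/eqP; move: i0; apply: gS_inj => i.
case: hsign => hs.
  have F0 : forall j, predT j -> 0 <= - (a j * gS le h j).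
    move=> j _; rewrite oppr_ge0; apply: mulr_ge0_le0; first exact: ltW.
    by have := hs j; rewrite partial_fS.
  have := psumr_eq0P F0; rewrite sumrN key oppr0 => /(_ erefl i isT) /eqP.
  by rewrite oppr_eq0 mulf_eq0 (gt_eqF (apos i)) /= => /eqP.
have F0 : forall j, predT j -> 0 <= a j * gS le h j.
  move=> j _; apply: mulr_ge0; first exact: ltW.
  by have := hs j; rewrite partial_fS.
have := psumr_eq0P F0; rewrite key => /(_ erefl i isT) /eqP.
by rewrite mulf_eq0 (gt_eqF (apos i)) /= => /eqP.
Qed.

Lemma gS_zero (h : 'I_n -> R) i : (forall k, h k = 0) -> gS le h i = 0.
Proof.
move=> z; rewrite /gS !big1 ?addr0 // => j _; by rewrite z; case: ifP => _.
Qed.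

Lemma sum_ind (i : 'I_n) (F : 'I_n -> R) : \sum_k (if k == i then F k else 0) = F i.
Proof. by rewrite -big_mkcond big_pred1_eq. Qed.

Lemma notC_St : ~ (exists h, inC (@fS R n le) h) -> exists a, inSt (@fS R n le) a.
Proof.
move=> nC.
have [v hv] := gS_surj (fun _ => 1).
case: (pselect (exists k, v k <= 0)) => [[k vk]|hn]; last first.
  exists v; split=> [i|i j]; last by rewrite !partial_fS !hv.
  rewrite ltNge; apply/negP => hi; case: hn; by exists i.
have vnz : exists i, v i != 0.
  case: (pselect (exists i, v i != 0)) => // hn; exfalso.
  have := hv k; rewrite gS_zero => [|i]; first by move=> /eqP; rewrite eq_sym oner_eq0.
  by apply/eqP; apply: contraT => hi; case: hn; by exists i.
have sv : 0 < \sum_i v i.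
  have := Hpd vnz; have := Bself le v.
  under eq_bigr do rewrite hv mulr1.
  move=> e h; lra.
have [j vj] : exists j, 0 < v j.
  case: (pselect (exists j, 0 < v j)) => // hn; exfalso.
  have : \sum_i v i <= 0.
    rewrite -oppr_ge0 -sumrN; apply: sumr_ge0 => i _; rewrite oppr_ge0 leNgt.
    by apply/negP => hi; case: hn; by exists i.
  lra.
have njk : (k == j) = false by apply/negbTE; apply: contraTneq vk => ->; rewrite -ltNge.
set b : 'I_n -> R := fun i => (if i == k then v j else 0) - (if i == j then v k else 0).
have [h hh] := gS_surj b.
apply: False_ind; apply: nC; exists h; split.
- rewrite /inH.
  transitivity (\sum_i h i * gS le v i); first by apply: eq_bigr => i _; rewrite hv mulr1.
  rewrite Bsym; under eq_bigr do rewrite hh /b mulrBr !(fun_if (fun x => v _ * x)) !mulr0.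
  by rewrite sumrB !sum_ind mulrC subrr.
- case: (pselect (exists i, h i != 0)) => // hn; exfalso.
  have := hh k; rewrite gS_zero => [|i].
    by rewrite /b eqxx njk subr0 => /eqP; rewrite eq_sym (gt_eqF vj).
  by apply/eqP; apply: contraT => hi; case: hn; by exists i.
- right => i; rewrite partial_fS hh /b.
  case: eqVneq => [->|nik]; first by rewrite njk subr0 ltW.
  by case: ifP => _; rewrite ?sub0r ?oppr_ge0 ?subr0.
Qed.

Lemma St_Stt (i0 : 'I_n) : (exists a, inSt (@fS R n le) a) -> exists u, inStt (@fS R n le) u.
Proof.
move=> [a [apos aeq]].
have geq : forall i j, gS le a i = gS le a j by move=> i j; rewrite -(partial_fS le i a) -(partial_fS le j a) (aeq i j).
set s := \sum_i a i.
have spos : 0 < s.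
  rewrite /s (bigD1 i0) //=; apply: ltr_wpDr; last exact: apos.
  by apply: sumr_ge0 => i _; apply: ltW.
set u : 'I_n -> R := fun i => s^-1 * a i.
have upos : forall i, 0 < u i by move=> i; rewrite mulr_gt0 ?invr_gt0.
have usum : \sum_i u i = 1 by rewrite -mulr_sumr mulVf // gt_eqF.
have Pu : inP u by split.
have expand : forall w, inPbar w -> fS le w = fS le u + fS le (fun j => w j - u j).
  move=> w [_ ws].
  have -> : w = (fun j => u j + 1 * (w j - u j)) by apply: funext => j; rewrite mul1r addrC subrK.
  rewrite fS_expand mul1r expr1n mul1r.
  have -> : \sum_i (w i - u i) * gS le u i = 0.
    under eq_bigr do rewrite gS_scale (geq _ i0).
    by rewrite -mulr_suml sumrB ws usum subrr mul0r.
  rewrite addr0; congr (_ + fS le _); apply: funext => j; by rewrite mul1r; ring.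
exists u; split=> //.
- apply: Hpd; exists i0; by rewrite gt_eqF ?upos.
- move=> w hw; rewrite (expand w hw) lerDl; exact: fS_ge0.
- move=> w hw nw; rewrite (expand w hw) ltrDl; apply: Hpd.
  case: (pselect (exists j, w j - u j != 0)) => // hn; exfalso; apply: nw.
  have e : forall j, w j = u j.
    move=> j; apply/eqP; rewrite -subr_eq0; apply: contraT => hj; case: hn; by exists j.
  by split=> [j|]; rewrite ?e //; under eq_bigr do rewrite e.
Qed.

Lemma Stt_St : (exists u, inStt (@fS R n le) u) -> exists a, inSt (@fS R n le) a.
Proof.
move=> [u [[upos usum] _ umin _]].
have key : forall i j, i != j -> ~ (gS le u j < gS le u i).
  move=> i j nij hlt.
  set B := gS le u i - gS le u j.
  have Bpos : 0 < B by rewrite subr_gt0.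
  set h : 'I_n -> R := fun k => (if k == i then 1 else 0) - (if k == j then 1 else 0).
  set F := fS le h.
  have F0 : 0 <= F by apply: fS_ge0.
  set tau := Num.min (u i) (B / (F + 1)).
  have tpos : 0 < tau by rewrite lt_min upos divr_gt0 //; lra.
  have tui : tau <= u i by rewrite ge_min lexx.
  have tB : tau * (F + 1) <= B.
    rewrite -ler_pdivlMr; last lra.
    by rewrite ge_min lexx orbT.
  have hsum : \sum_k h k = 0 by rewrite sumrB !sum_ind subrr.
  have hB : \sum_k h k * gS le u k = B.
    under eq_bigr do rewrite mulrBl !(fun_if (fun x => x * gS le u _)) !mul1r !mul0r.
    by rewrite sumrB !sum_ind.
  set w := fun k => u k + (- tau) * h k.
  have Pw : inPbar w.
    split=> [k|].
      rewrite /w /h; case: eqVneq => [->|nki].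
        rewrite (negbTE nij) subr0 mulr1; lra.
      case: eqVneq => [->|nkj]; first by rewrite sub0r mulrN1 opprK; have := upos j; lra.
      by rewrite subrr mulr0 addr0 ltW.
    by rewrite /w big_split /= -mulr_sumr hsum mulr0 addr0.
  have := umin w Pw; rewrite /w fS_expand hB -/F => hh.
  nra.
exists u; split=> // i j; rewrite !partial_fS.
case: (eqVneq i j) => [->//|nij].
apply/eqP; rewrite eq_le !leNgt; apply/andP; split; apply/negP.
  exact: key.
by apply: key; rewrite eq_sym.
Qed.

End Quad.

Unset Implicit Arguments.

Theorem corollary3 (R : realType) (n : nat) (le : rel 'I_n) :
  (0 < n)%N ->
  is_poset le ->
  hasse_acyclic le ->
  (pos_def (@fS R n le) \/ pos_def (@titsS R n le)) ->
  [/\ pos_def (@fS R n le), pos_def (@titsS R n le),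
      ((~ exists h, inC (@fS R n le) h) <-> (exists u, inStt (@fS R n le) u))
    & ((exists u, inStt (@fS R n le) u) <-> (exists a, inSt (@fS R n le) a))].
Proof.
move=> n0 Hpo Hac hpd.
have T := @pd_transfer R n le Hpo Hac.
have pdf : pos_def (@fS R n le) by case: hpd => // /T.
have i0 : 'I_n := Ordinal n0.
split=> //.
- exact: (proj1 T pdf).
- split=> H.
    exact: (@St_Stt R n le pdf i0 (@notC_St R n le pdf H)).
  exact: (@St_notC R n le pdf (@Stt_St R n le pdf H)).
- split=> H; first exact: (@Stt_St R n le pdf H).
  exact: (@St_Stt R n le pdf i0 H).
Qed.
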